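(* Let $K$ be an $\mathbb N$-valued random variable with $\Pr(K=k)=k^{-5/4}/c$, and let $Y$ be a random variable coupled with $K$ taking the value ''red'' with conditional probability $2^{-K}$ and ''blue'' with conditional probability $1-2^{-K}$. Let $(K_i,Y_i)_{i\in\mathbb N}$ be i.i.d. copies of $(K,Y)$. Then almost every realization $(k_i,y_i)$ stabilizes, i.e. there is $i_0$ such that for all $i>i_0$: (1) the maximal value $k_m$ among $k_1,\ldots,k_i$ is a simple record; (2) $\max\{k_1,\ldots,k_i\}>i$; (3) $y_m=$ ''blue'' for the maximal record-time $m\le i$.
   Context: For a sequence $(k_i)$ of natural numbers, $i$ is a record-time if $k_i>k_j$ for all $j<i$, a non-strict record-time if $k_i\ge k_j$ for all $j<i$, and a record-time $i$ (or record $k_i$) is simple if $k_i<k_j$ for every non-strict record-time $j>i$. *)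

(* Defs.v *)
From HB Require Import structures.
From mathcomp Require Import all_boot all_order all_algebra.
From mathcomp Require Import all_classical all_reals all_analysis.
Set Implicit Arguments. Unset Strict Implicit. Unset Printing Implicit Defensive.
Import Order.TTheory GRing.Theory Num.Theory.
Local Open Scope classical_set_scope.
Local Open Scope ring_scope.

(* Deterministic sequences are 0-indexed: position j corresponds to the
   paper's index j+1. *)

Definition record_time (k : nat -> nat) (i : nat) : Prop :=
  forall j, (j < i)%N -> (k j < k i)%N.

Definition nonstrict_record_time (k : nat -> nat) (i : nat) : Prop :=
  forall j, (j < i)%N -> (k j <= k i)%N.

Definition simple_record (k : nat -> nat) (i : nat) : Prop :=
  record_time k i /\
  forall j, (i < j)%N -> nonstrict_record_time k j -> (k i < k j)%N.

(* Colours: true = "red", false = "blue". *)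
Definition stabilizes (k : nat -> nat) (y : nat -> bool) : Prop :=
  exists i0 : nat, forall i : nat, (i0 < i)%N ->
    (exists m : nat,
        [/\ (m < i)%N, record_time k m,
            (forall j, (m < j < i)%N -> ~ record_time k j),
            simple_record k m & y m = false])
    /\ (i < \max_(j < i) k j)%N.

Definition cK (R : realType) : R :=
  limn (fun n : nat => \sum_(1 <= k < n) (k%:R `^ (- (5%:R / 4%:R)) : R)).

Definition pK (R : realType) (k : nat) : R :=
  if k == 0%N then 0 else (k%:R `^ (- (5%:R / 4%:R))) / cK R.

Definition pKY (R : realType) (k : nat) (red : bool) : R :=
  pK R k * (if red then (2%:R ^- k) else 1 - 2%:R ^- k).

(* Main.v *)
Require Import Defs.
From HB Require Import structures.
From mathcomp Require Import all_boot all_order all_algebra.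
From mathcomp Require Import all_classical all_reals all_analysis.
From mathcomp Require Import ring lra.
Import Order.TTheory GRing.Theory Num.Theory.
Local Open Scope classical_set_scope.
Local Open Scope ring_scope.
Set Implicit Arguments. Unset Strict Implicit. Unset Printing Implicit Defensive.
Lemma union_bound (R : realType) (d : measure_display) (T : measurableType d)
  (P : probability T R) (A : nat -> set T) (b : nat -> R) (B : R) :
  (forall n, measurable (A n)) -> (forall n, P (A n) <= (b n)%:E)%E ->
  (forall N, \sum_(n < N) b n <= B) -> (P (\bigcup_n A n) <= B%:E)%E.
Proof.
move=> mA hA hB.
have H1 := @measure_sigma_subadditive _ _ T P (\bigcup_n A n) A mA (bigcup_measurable (fun n _ => mA n)) (subset_refl _).
have H2 : (\sum_(n <oo) P (A n) <= B%:E)%E.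
  apply: lime_le.
    by apply: is_cvg_nneseries => n _ _; exact: measure_ge0.
  near=> N.
  apply: (@le_trans _ _ (\sum_(0 <= n < N) (b n)%:E)%E).
    by apply: lee_sum => n _; exact: hA.
  by rewrite sumEFin lee_fin big_mkord hB.
exact: le_trans (H1 (subset_refl _)) H2.
Unshelve. all: by end_near. Qed.
Definition fp (R : realType) (x : R) : R := x `^ (- (5%:R / 4%:R)).

Lemma fp_gt0 (R : realType) (x : R) : 0 < x -> 0 < fp x.
Proof. by move=> hx; rewrite /fp powR_gt0. Qed.

Lemma fp_decr (R : realType) (x y : R) : 0 < x -> x <= y -> fp y <= fp x.
Proof.
move=> hx hxy; have hy : 0 < y by apply: lt_le_trans hxy.
rewrite /fp !powRN lef_pV2 ?posrE ?powR_gt0 //.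
by apply: ge0_ler_powR => //; rewrite ?nnegrE ltW.
Qed.

Lemma fpM (R : realType) (x y : R) : 0 <= x -> 0 <= y -> fp (x * y) = fp x * fp y.
Proof. by move=> hx hy; rewrite /fp powRM. Qed.

Lemma fp1 (R : realType) : fp (1 : R) = 1.
Proof. by rewrite /fp powR1. Qed.

Lemma fp2_4 (R : realType) : fp (2 : R) ^+ 4 = (32 : R)^-1.
Proof.
rewrite /fp -powR_mulrn ?powR_ge0 // -powRrM.
have -> : - (5%:R / 4%:R) * 4%:R = - (5%:R : R) by rewrite mulNr divfK // pnatr_eq0.
by rewrite powRN powR_mulrn // -natrX.
Qed.

Lemma fp2_ge (R : realType) : (4 : R)^-1 <= fp (2 : R).
Proof.
have h2 := fp2_4 R.
have hp : 0 < fp (2 : R) by apply: fp_gt0.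
rewrite leNgt; apply/negP => hlt.
have : fp (2 : R) ^+ 4 < (4 : R)^-1 ^+ 4.
  by rewrite ltrXn2r // ltW.
rewrite h2; apply/negP; rewrite -leNgt.
by rewrite exprVn lef_pV2 ?posrE ?exprn_gt0 // -natrX ler_nat.
Qed.

Lemma fp2X (R : realType) k : fp ((2 : R) ^+ k) = fp (2 : R) ^+ k.
Proof.
elim: k => [|k IH]; first by rewrite !expr0 fp1.
by rewrite !exprS fpM ?exprn_ge0 // IH.
Qed.

Lemma pK_fp (R : realType) k : (0 < k)%N -> pK R k = fp (k%:R : R) / cK R.
Proof. by rewrite /pK /fp; case: k. Qed.
Lemma geom_le (R : realType) (q : R) N : 0 <= q -> q < 1 ->
  \sum_(e < N) q ^+ e <= (1 - q)^-1.
Proof.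
move=> q0 q1.
have h : (1 - q) * \sum_(e < N) q ^+ e = 1 - q ^+ N.
  elim: N => [|N IH]; first by rewrite big_ord0 expr0 mulr0 subrr.
  by rewrite big_ord_recr /= mulrDr IH exprS; ring.
have hq : 0 < 1 - q by rewrite subr_gt0.
rewrite -(ler_pM2l hq) h mulfV ?lt0r_neq0 //.
by rewrite gerBl exprn_ge0.
Qed.

Lemma bern_le (R : realType) (x : R) N : 0 <= x -> x <= 1 ->
  (1 - x) ^+ N * (1 + N%:R * x) <= 1.
Proof.
move=> x0 x1; elim: N => [|N IH]; first by rewrite expr0 mul0r addr0 mulr1.
apply: le_trans IH.
rewrite exprSr -mulrA ler_wpM2l ?exprn_ge0 ?subr_ge0 //.
have hN : 0 <= (N%:R : R) by [].
rewrite -natr1; have := mulr_ge0 (mulr_ge0 hN x0) x0; nra.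
Qed.
Lemma e1 (R : realType) n : (((16 ^ n)%N)%:R : R) = (2 ^+ n) ^+ 4.
Proof. by rewrite natrX -exprM mulnC exprM -[in RHS]natrX. Qed.
Lemma e2 (R : realType) n : (((16 ^ n.+1)%N)%:R : R) = 16 * (2 ^+ n) ^+ 4.
Proof. by rewrite natrX exprS -exprM mulnC exprM -[in RHS]natrX. Qed.
Lemma e3 (R : realType) n : (((16 ^ n.+1)%N)%:R : R) = 2 ^+ (4 * n.+1).
Proof. by rewrite natrX exprM -[in RHS]natrX. Qed.
Lemma e4 (R : realType) n : ((32 : R)^-1) ^+ n.+1 = 32^-1 * ((2 ^+ n) ^+ 5)^-1.
Proof. by rewrite exprS exprVn -exprM mulnC exprM -[in RHS]natrX. Qed.
Lemma e5 (R : realType) n : (8%:R ^-1 : R) ^+ n = ((2 ^+ n) ^+ 3)^-1.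
Proof. by rewrite exprVn -exprM mulnC exprM -[in RHS]natrX. Qed.
Lemma sq_tail_aux (R : realType) W N : (0 < W)%N ->
  \sum_(e < N) ((W.+1 + e)%:R ^+ 2 : R)^-1 <= W%:R^-1 - ((W + N)%:R)^-1.
Proof.
move=> W0; elim: N => [|N IH]; first by rewrite big_ord0 addn0 subrr.
rewrite big_ord_recr /=.
have ha : 0 < ((W + N)%:R : R) by rewrite ltr0n addn_gt0 W0.
set a := ((W + N)%:R : R) in ha IH.
have e1 : ((W.+1 + N)%:R : R) = a + 1 by rewrite /a addSn -natr1.
have e2 : ((W + N.+1)%:R : R) = a + 1 by rewrite /a addnS -natr1.
rewrite e1 e2.
have h : ((a + 1) ^+ 2)^-1 <= a^-1 - (a + 1)^-1.
  have -> : a^-1 - (a + 1)^-1 = (a * (a + 1))^-1.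
    by field; rewrite -natrD natr1 !pnatr_eq0 /= -lt0n addn_gt0 W0.
  rewrite lef_pV2 ?posrE ?exprn_gt0 ?mulr_gt0 ?addr_gt0 //.
  by rewrite expr2 ler_pM2r ?addr_gt0 //; lra.
lra.
Qed.

Lemma sq_tail (R : realType) W N : (0 < W)%N ->
  \sum_(e < N) ((W.+1 + e)%:R ^+ 2 : R)^-1 <= W%:R^-1.
Proof.
move=> W0; apply: le_trans (sq_tail_aux R N W0) _.
by rewrite gerBl invr_ge0 ler0n.
Qed.

Lemma geom_tail (R : realType) (r : R) W N : 0 <= r -> r < 1 ->
  \sum_(e < N) r ^+ (W + e) <= r ^+ W / (1 - r).
Proof.
move=> r0 r1.
have -> : \sum_(e < N) r ^+ (W + e) = r ^+ W * \sum_(e < N) r ^+ e.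
  by rewrite mulr_sumr; apply: eq_bigr => e _; rewrite exprD.
by rewrite ler_wpM2l ?exprn_ge0 ?geom_le.
Qed.

Lemma inv_pow_le (R : realType) m W : (1 < m)%N -> (0 < W)%N ->
  ((m%:R : R)^-1) ^+ W <= W%:R^-1.
Proof.
move=> m1 W0; rewrite exprVn lef_pV2 ?posrE ?exprn_gt0 ?ltr0n //; last by apply: leq_trans m1.
by rewrite -natrX ler_nat ltnW // ltn_expl.
Qed.
Lemma prodF (R : realType) m e (a b : R) :
  \prod_(i < (m + e).+2) (if ((i : nat) == m) || ((i : nat) == (m + e).+1) then a else b) =
  b ^+ m * a * b ^+ e * a.
Proof.
rewrite big_ord_recr /= eqxx orbT; congr (_ * _).
rewrite (eq_bigr (fun i : 'I_(m + e).+1 => if (i : nat) == m then a else b)); last first.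
  by move=> i _; rewrite (ltn_eqF (ltn_ord i)) orbF.
rewrite -(big_mkord xpredT (fun i => if i == m then a else b)).
have hm : (m <= (m + e).+1)%N by rewrite ltnW // ltnS leq_addr.
rewrite (@big_cat_nat _ _ _ m 0 (m + e).+1 _ _ (leq0n m) hm) /= [X in _ * X]big_ltn ?ltnS ?leq_addr //= eqxx.
rewrite (eq_big_nat _ _ (F2 := fun _ => b)); last first.
  by move=> i /andP[_ him]; rewrite (ltn_eqF him).
rewrite [X in _ * (_ * X)](eq_big_nat _ _ (F2 := fun _ => b)); last first.
  by move=> i /andP[him _]; rewrite (gtn_eqF him).
by rewrite !prodr_const_nat subn0 subSS addKn mulrA.
Qed.

Lemma prodG (R : realType) m (a b : R) :
  \prod_(i < m.+1) (if (i : nat) == m then a else b) = b ^+ m * a.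
Proof.
rewrite big_ord_recr /= eqxx; congr (_ * _).
rewrite (eq_bigr (fun _ => b)); last by move=> i _; rewrite (ltn_eqF (ltn_ord i)).
by rewrite prodr_const card_ord.
Qed.
Section Det.
Local Open Scope nat_scope.
Lemma det (k : nat -> nat) (y : nat -> bool) V : (0 < V)%N ->
 (forall v m e, (V <= v)%N -> ~ (k m = v /\ k (m + e).+1 = v /\
     forall l, (l < (m + e).+1)%N -> l != m -> (k l < v)%N)) ->
 (forall v m, (V <= v)%N -> ~ (k m = v /\ y m = true /\ forall l, (l < m)%N -> (k l < v)%N)) ->
 (forall n, (V <= n)%N -> ~ (forall l, (l < 16 ^ n)%N -> (k l < 16 ^ n.+1)%N)) ->
 stabilizes k y.
Proof.
move=> V0 hF hG hD.
exists (16 ^ V)%N => i hi.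
have hV : (V < 16 ^ V)%N by apply: ltn_expl.
have i0 : (0 < i)%N by apply: leq_ltn_trans hi.
set M := (\max_(j < i) k j)%N.
have kM : forall l, (l < i)%N -> (k l <= M)%N.
  by move=> l hl; exact: (@leq_bigmax _ (fun j : 'I_i => k j) (Ordinal hl)).
have hMax : (i < M)%N.
  rewrite ltnNge; apply/negP => hMi.
  have /andP[h1 h2] := trunc_log_bounds (erefl : (1 < 16)%N) i0.
  set n := trunc_log 16 i in h1 h2.
  have hn : (V <= n)%N.
    rewrite leqNgt; apply/negP => hnV.
    have := leq_pexp2l (erefl : (0 < 16)%N) hnV.
    move=> h3; have := leq_ltn_trans h3 hi; rewrite ltnNge ltnW //.
  apply: (hD n hn) => l hl.
  have hl' : (l < i)%N by apply: leq_trans hl h1.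
  exact: leq_ltn_trans (leq_trans (kM l hl') hMi) h2.
split => //.
have [j0 hj0] := @bigop.eq_bigmax _ (fun j : 'I_i => k j) (ltac:(by rewrite card_ord)).
have exM : exists m, (m < i) && (k m == M) by exists j0; rewrite ltn_ord -hj0 eqxx.
case: (ex_minnP exM) => m /andP[hmi /eqP hkm] hmin.
have hlt : forall l, (l < m)%N -> (k l < M)%N.
  move=> l hl; rewrite ltn_neqAle kM ?andbT; last by apply: ltn_trans hl hmi.
  apply/negP => /eqP hl2.
  have := hmin l; rewrite hl2 eqxx andbT (ltn_trans hl hmi) => /(_ isT).
  by rewrite leqNgt hl.
have hVM : (V <= M)%N by apply: ltnW; apply: leq_ltn_trans (ltnW hV) (ltn_trans hi hMax).
have rec : record_time k m by move=> j hj; rewrite hkm hlt.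
exists m; split => //.
- move=> j /andP[hmj hji] hr.
  have := hr m hmj; rewrite hkm ltnNge kM //.
- split => // j hmj hnr.
  rewrite ltnNge; apply/negP => hjm.
  have hkj : k j = M by apply/eqP; rewrite eqn_leq -hkm hjm hnr.
  have exJ : exists j', (m < j') && (k j' == M) by exists j; rewrite hmj hkj eqxx.
  case: (ex_minnP exJ) => j' /andP[hmj' /eqP hkj'] hminj.
  have hj'j : (j' <= j)%N by apply: hminj; rewrite hmj hkj eqxx.
  apply: (hF M m (j' - m).-1 hVM).
  have ej : (m + (j' - m).-1).+1 = j' by rewrite -addnS prednK ?subn_gt0 // subnKC // ltnW.
  rewrite ej; split => //; split => // l hl hlm.
  case: (ltngtP l m) => [hlm'| hml | e]; first exact: hlt.
    rewrite ltn_neqAle; apply/andP; split.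
      apply/negP => /eqP hkl.
      have := hminj l; rewrite hml hkl eqxx => /(_ isT).
      by rewrite leqNgt hl.
    rewrite -hkj; apply: hnr; exact: leq_trans hl hj'j.
  by rewrite e eqxx in hlm.
- apply/negP => hy.
  apply: (hG M m hVM); split => //; split => //.
Qed.
End Det.
Section Main.
Variables (R : realType) (d : measure_display) (T : measurableType d)
  (P : probability T R) (K : nat -> T -> nat) (Y : nat -> T -> bool).
Hypothesis hmeas : forall (i k : nat) (b : bool),
      measurable [set w | K i w = k /\ Y i w = b].
Hypothesis hiid : forall (n : nat) (k : nat -> nat) (b : nat -> bool),
      P [set w | forall i, (i < n)%N -> K i w = k i /\ Y i w = b i]
      = (\prod_(i < n) pKY R (k i) (b i))%:E.

Definition Cyl n L (f : {ffun 'I_n -> 'I_L.+1 * bool}) : set T :=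
  [set w | forall i : 'I_n, K i w = (f i).1 /\ Y i w = (f i).2].

Definition kf n L (f : {ffun 'I_n -> 'I_L.+1 * bool}) (i : nat) : nat :=
  oapp (fun j => ((f j).1 : nat)) 0%N (insub i).
Definition bf n L (f : {ffun 'I_n -> 'I_L.+1 * bool}) (i : nat) : bool :=
  oapp (fun j => (f j).2) false (insub i).

Lemma CylE n L f : Cyl f = [set w | forall i, (i < n)%N -> K i w = @kf n L f i /\ Y i w = bf f i].
Proof.
rewrite /Cyl /kf /bf; apply/seteqP; split => w /= h.
  move=> i hi; have := h (Ordinal hi).
  by rewrite insubT /=.
move=> i; have := h i (ltn_ord i).
by rewrite valK.
Qed.

Lemma Cyl_meas n L f : measurable (@Cyl n L f).
Proof.
rewrite CylE.
have -> : [set w | forall i, (i < n)%N -> K i w = @kf n L f i /\ Y i w = bf f i] =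
  \bigcap_(i in [set i | (i < n)%N]) [set w | K i w = kf f i /\ Y i w = bf f i].
  by apply/seteqP; split => w /= h i hi; exact: h.
by apply: bigcap_measurableType => i _; exact: hmeas.
Qed.

Lemma Cyl_prob n L f : P (@Cyl n L f) = (\prod_(i < n) pKY R (f i).1 (f i).2)%:E.
Proof.
rewrite CylE hiid; congr (_%:E); apply: eq_bigr => i _.
by rewrite /kf /bf valK.
Qed.

Definition Ev n L (Q : nat -> nat -> bool -> bool) : set T :=
  [set w | forall i, (i < n)%N -> (K i w <= L)%N /\ Q i (K i w) (Y i w)].

Lemma EvE n L Q : Ev n L Q =
  \bigcup_(f in [set f : {ffun 'I_n -> 'I_L.+1 * bool} |
                   f \in family (fun i : 'I_n => [pred x : 'I_L.+1 * bool | Q i x.1 x.2])])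
     Cyl f.
Proof.
apply/seteqP; split => w /=.
  move=> h.
  exists [ffun i : 'I_n => ((inord (K i w) : 'I_L.+1), Y i w)].
    rewrite /=; apply/familyP => i; rewrite ffunE inE /=.
    have [hl hq] := h i (ltn_ord i).
    by rewrite inordK.
  move=> i; rewrite ffunE /=; split => //.
  by have [hl _] := h i (ltn_ord i); rewrite inordK.
move=> [f /familyP hf hc] i hi.
have [h1 h2] := hc (Ordinal hi); rewrite /= in h1 h2.
have := hf (Ordinal hi); rewrite inE /= -h1 -h2 => ->.
by rewrite -ltnS h1 ltn_ord.
Qed.

Lemma Ev_meas n L Q : measurable (Ev n L Q).
Proof.
rewrite EvE; apply: fin_bigcup_measurable; first exact: finite_finset.
by move=> f _; exact: Cyl_meas.
Qed.

Lemma Ev_prob n L Q : P (Ev n L Q) =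
  (\prod_(i < n) \sum_(x : 'I_L.+1 * bool | Q i x.1 x.2) pKY R x.1 x.2)%:E.
Proof.
rewrite EvE measure_fin_bigcup; first last.
- by move=> f _; exact: Cyl_meas.
- move=> f g _ _ [w [hf hg]]; apply/ffunP => i.
  have [f1 f2] := hf i; have [g1 g2] := hg i.
  rewrite (surjective_pairing (f i)) (surjective_pairing (g i)); congr (_, _).
    by apply/val_inj; rewrite /= -f1 -g1.
  by rewrite -f2 -g2.
- exact: finite_finset.
rewrite (fsbigE (enum (family (fun i : 'I_n => [pred x : 'I_L.+1 * bool | Q i x.1 x.2])))).
- rewrite big_enum_cond /=.
  under eq_bigr do rewrite Cyl_prob.
  rewrite sumEFin; congr (_%:E).
  rewrite bigA_distr_big_dep; apply: eq_bigl => f.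
  by rewrite mem_setE andbb.
- exact: enum_uniq.
- by move=> f /=; rewrite mem_enum.
- by move=> f /= hf; rewrite mem_enum hf.
Qed.


Lemma sum_pair L (Q : nat -> bool -> bool) :
  \sum_(x : 'I_L.+1 * bool | Q x.1 x.2) pKY R x.1 x.2 =
  \sum_(k < L.+1) \sum_(b : bool | Q k b) pKY R k b.
Proof. by rewrite pair_big_dep. Qed.

Lemma pKY_sum k : pKY R k true + pKY R k false = pK R k.
Proof. by rewrite /pKY; ring. Qed.

Lemma sum_bool_all k : \sum_(b : bool) pKY R k b = pK R k.
Proof. by rewrite big_bool /= pKY_sum. Qed.

Lemma hP1 k b : P [set w | forall i, (i < 1)%N -> K i w = k /\ Y i w = b] = (pKY R k b)%:E.
Proof. by rewrite (hiid 1 (fun _ => k) (fun _ => b)) big_ord1. Qed.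

Lemma pK1 : pK R 1 = (cK R)^-1.
Proof. by rewrite /pK /= powR1 mul1r. Qed.

Lemma cK_ge0 : 0 <= cK R.
Proof.
have : (0 <= (pKY R 1 false)%:E)%E by rewrite -hP1; exact: measure_ge0.
rewrite lee_fin /pKY pK1 expr1.
have h : 0 < 1 - (2%:R : R)^-1 by rewrite subr_gt0 invf_lt1 // ltr1n.
by rewrite pmulr_lge0 // invr_ge0.
Qed.

Lemma Ev1_prob L : P (Ev 1 L (fun _ _ _ => true)) = (\sum_(k < L.+1) pK R k)%:E.
Proof.
rewrite Ev_prob big_ord1 /= (sum_pair L (fun _ _ => true)).
congr (_%:E); apply: eq_bigr => k _; rewrite -sum_bool_all.
by apply: eq_bigl.
Qed.

Lemma sum_pK_le1 a : \sum_(k < a) pK R k <= 1.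
Proof.
case: a => [|L]; first by rewrite big_ord0.
by have := probability_le1 P (Ev_meas 1 L (fun _ _ _ => true)); rewrite Ev1_prob lee_fin.
Qed.

Lemma cK_gt0 : 0 < cK R.
Proof.
rewrite lt_def cK_ge0 andbT; apply/eqP => c0.
have pK0 k : pK R k = 0 by rewrite /pK c0 invr0 mulr0 if_same.
have h : (P (\bigcup_L Ev 1 L (fun _ _ _ => true)) <= 0%:E)%E.
  apply: (union_bound (b := fun _ => 0)).
  - by move=> L; exact: Ev_meas.
  - by move=> L; rewrite Ev1_prob big1.
  - by move=> N; rewrite big1.
have e : \bigcup_L Ev 1 L (fun _ _ _ => true) = setT.
  apply/seteqP; split => // w _; exists (K 0%N w) => // i.
  by rewrite ltnS leqn0 => /eqP ->.
by move: h; rewrite e probability_setT lee_fin ler10.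
Qed.


Lemma pK_ge0 k : 0 <= pK R k.
Proof.
case: k => [|k]; first by rewrite /pK.
by rewrite pK_fp // divr_ge0 ?cK_ge0 // ltW // fp_gt0 // ltr0Sn.
Qed.

Lemma tail_ge a : (0 < a)%N ->
  a%:R * fp ((a + a)%:R : R) / cK R <= 1 - \sum_(k < a) pK R k.
Proof.
move=> a0.
have h := sum_pK_le1 (a + a).
have e : \sum_(k < a + a) pK R k = \sum_(k < a) pK R k + \sum_(a <= k < a + a) pK R k.
  by rewrite -(big_mkord xpredT (pK R)) -(big_mkord xpredT (pK R)) (@big_cat_nat _ _ _ a 0 (a + a) _ _ (leq0n a) (leq_addr a a)).
rewrite e in h.
have h2 : a%:R * fp ((a + a)%:R : R) / cK R <= \sum_(a <= k < a + a) pK R k.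
  have -> : a%:R * fp ((a + a)%:R : R) / cK R = \sum_(a <= k < a + a) (fp ((a + a)%:R : R) / cK R).
    by rewrite sumr_const_nat addnK -mulrA mulr_natl.
  apply: ler_sum_nat => k /andP[hk1 hk2].
  rewrite pK_fp; last by apply: leq_trans hk1.
  rewrite ler_pM2r ?invr_gt0 ?cK_gt0 //.
  apply: fp_decr; first by rewrite ltr0n; apply: leq_trans hk1.
  by rewrite ler_nat ltnW.
lra.
Qed.

End Main.
Lemma sum_b (R : realType) (c : bool) k :
  \sum_(b : bool | c) pKY R k b = if c then pK R k else 0.
Proof. by case: c; [rewrite big_bool /= pKY_sum | rewrite big_pred0]. Qed.

Lemma sum_b_red (R : realType) (c : bool) k :
  \sum_(b : bool | c && b) pKY R k b = if c then pKY R k true else 0.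
Proof.
case: c; last by rewrite big_pred0.
rewrite (big_pred1 true) //. by case.
Qed.

Lemma factorF (R : realType) (c : bool) v :
  \sum_(x : 'I_v.+1 * bool | if c then (x.1 : nat) == v else (x.1 < v)%N) pKY R x.1 x.2
  = if c then pK R v else \sum_(k < v) pK R k.
Proof.
rewrite (@sum_pair R v (fun k (_ : bool) => if c then k == v else (k < v)%N)).
rewrite big_ord_recr /=.
case: c.
  rewrite big1 ?add0r; last by move=> k _; rewrite (ltn_eqF (ltn_ord k)) sum_b.
  by rewrite eqxx sum_b.
rewrite ltnn sum_b addr0; apply: eq_bigr => k _.
by rewrite (ltn_ord k) sum_b.
Qed.

Lemma factorG (R : realType) (c : bool) v :
  \sum_(x : 'I_v.+1 * bool | if c then ((x.1 : nat) == v) && x.2 else (x.1 < v)%N) pKY R x.1 x.2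
  = if c then pKY R v true else \sum_(k < v) pK R k.
Proof.
rewrite (@sum_pair R v (fun k (b : bool) => if c then (k == v) && b else (k < v)%N)).
rewrite big_ord_recr /=.
case: c.
  rewrite big1 ?add0r; last by move=> k _; rewrite (ltn_eqF (ltn_ord k)) sum_b_red.
  by rewrite eqxx sum_b_red.
rewrite ltnn sum_b addr0; apply: eq_bigr => k _.
by rewrite (ltn_ord k) sum_b.
Qed.
Section Main2.
Variables (R : realType) (d : measure_display) (T : measurableType d)
  (P : probability T R) (K : nat -> T -> nat) (Y : nat -> T -> bool).
Hypothesis hmeas : forall (i k : nat) (b : bool),
      measurable [set w | K i w = k /\ Y i w = b].
Hypothesis hiid : forall (n : nat) (k : nat -> nat) (b : nat -> bool),
      P [set w | forall i, (i < n)%N -> K i w = k i /\ Y i w = b i]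
      = (\prod_(i < n) pKY R (k i) (b i))%:E.

Local Notation Ev := (Ev K Y).
Local Notation q v := (\sum_(k < v) pK R k).

Definition Fset v m e := [set w | K m w = v /\ K (m + e).+1 w = v /\
   forall l, (l < (m + e).+1)%N -> l != m -> (K l w < v)%N].
Definition Gset v m := [set w | K m w = v /\ Y m w = true /\
   forall l, (l < m)%N -> (K l w < v)%N].
Definition Dset n := [set w | forall l, (l < 16 ^ n)%N -> (K l w < 16 ^ n.+1)%N].

Definition QF (v m e : nat) := fun (i k : nat) (b : bool) =>
  if (i == m) || (i == (m + e).+1) then k == v else (k < v)%N.
Definition QG (v m : nat) := fun (i k : nat) (b : bool) => if i == m then (k == v) && b else (k < v)%N.

Lemma FsetE v m e : Fset v m e = Ev (m + e).+2 v (QF v m e).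
Proof.
apply/seteqP; split => w /=.
  move=> [h1 [h2 h3]] i hi; rewrite /QF.
  case: eqP => [->|him] /=; first by rewrite h1 leqnn eqxx.
  case: eqP => [->|hie]; first by rewrite h2 leqnn eqxx.
  have hl : (i < (m + e).+1)%N by rewrite ltn_neqAle -ltnS hi andbT; apply/eqP.
  have := h3 i hl (introN eqP him) => hk.
  by rewrite hk ltnW.
move=> h; split; last split.
- have hm : (m < (m + e).+2)%N by rewrite ltnS -addnS leq_addr.
  have [_] := h m hm.
  by rewrite /QF eqxx /= => /eqP.
- have [_] := h (m + e).+1 (ltnSn _).
  by rewrite /QF eqxx orbT => /eqP.
- move=> l hl hlm; have [_] := h l (ltnW (leq_trans hl (ltnSn _))).
  by rewrite /QF (negbTE hlm) /= (ltn_eqF hl).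
Qed.

Lemma GsetE v m : Gset v m = Ev m.+1 v (QG v m).
Proof.
apply/seteqP; split => w /=.
  move=> [h1 [h2 h3]] i hi; rewrite /QG.
  case: eqP => [->|him] /=; first by rewrite h1 h2 leqnn eqxx.
  have hl : (i < m)%N by rewrite ltn_neqAle -ltnS hi andbT; apply/eqP.
  by have := h3 i hl => hk; rewrite hk ltnW.
move=> h; have [_] := h m (ltnSn _); rewrite /QG eqxx => /andP[/eqP h1 h2].
split => //; split => // l hl; have [_] := h l (ltnW hl).
by rewrite /QG (ltn_eqF hl).
Qed.

Lemma DsetE n : Dset n = Ev (16 ^ n) (16 ^ n.+1).-1 (fun _ _ _ => true).
Proof.
have hu : (0 < 16 ^ n.+1)%N by rewrite expn_gt0.
apply/seteqP; split => w /= h i hi.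
  by split => //; rewrite -ltnS prednK //; exact: h.
by have [+ _] := h i hi; rewrite -ltnS prednK.
Qed.


Let hc : 0 < cK R := cK_gt0 hmeas hiid.

Lemma Fset_meas v m e : measurable (Fset v m e).
Proof. by rewrite FsetE; apply: Ev_meas. Qed.
Lemma Gset_meas v m : measurable (Gset v m).
Proof. by rewrite GsetE; apply: Ev_meas. Qed.
Lemma Dset_meas n : measurable (Dset n).
Proof. by rewrite DsetE; apply: Ev_meas. Qed.

Lemma PF v m e : P (Fset v m e) = ((q v) ^+ m * pK R v * (q v) ^+ e * pK R v)%:E.
Proof.
rewrite FsetE (Ev_prob hmeas hiid); congr (_%:E); rewrite -prodF.
by apply: eq_bigr => i _; rewrite /QF factorF.
Qed.

Lemma PG v m : P (Gset v m) = ((q v) ^+ m * pKY R v true)%:E.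
Proof.
rewrite GsetE (Ev_prob hmeas hiid); congr (_%:E); rewrite -prodG.
by apply: eq_bigr => i _; rewrite /QG factorG.
Qed.

Lemma PD n : P (Dset n) = ((q (16 ^ n.+1)) ^+ (16 ^ n))%:E.
Proof.
rewrite DsetE (Ev_prob hmeas hiid); congr (_%:E).
rewrite prodr_const card_ord; congr (_ ^+ _).
rewrite (@sum_pair R _ (fun _ _ => true)) prednK ?expn_gt0 //.
by apply: eq_bigr => k _; rewrite sum_b.
Qed.


Lemma key v : (0 < v)%N -> [/\ 0 < pK R v, 0 <= q v, pK R v <= 1 - q v &
   v%:R * pK R v <= 4 * (1 - q v)].
Proof.
move=> v0; split.
- by rewrite pK_fp // divr_gt0 // fp_gt0 // ltr0n.
- by apply: sumr_ge0 => k _; exact: (pK_ge0 hiid).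
- by have := sum_pK_le1 hmeas hiid v.+1; rewrite big_ord_recr /=; lra.
have t := tail_ge hmeas hiid v0.
have e : ((v + v)%:R : R) = 2 * v%:R by rewrite natrD; ring.
rewrite e fpM ?ler0n // in t.
have f2 := fp2_ge R.
rewrite pK_fp //.
set X := v%:R * fp (v%:R : R) / cK R.
have hX : 0 <= X by rewrite /X divr_ge0 ?mulr_ge0 ?ler0n ?ltW ?fp_gt0 ?ltr0n.
have e2 : v%:R * (fp 2 * fp v%:R) / cK R = fp (2 : R) * X by rewrite /X; ring.
rewrite e2 in t.
have -> : v%:R * (fp (v%:R : R) / cK R) = X by rewrite /X mulrA.
nra.
Qed.


Lemma boundF v : (0 < v)%N ->
  (P (\bigcup_m \bigcup_e Fset v m e) <= (16 / (v%:R ^+ 2))%:E)%E.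
Proof.
move=> v0; have [hp hq hps hvp] := key v0.
set p := pK R v in hp hps hvp *; set qv := q v in hq hps hvp *.
have hs : 0 < 1 - qv by apply: lt_le_trans hps.
have hq1 : qv < 1 by lra.
have hv : 0 < (v%:R : R) by rewrite ltr0n.
apply: (union_bound (b := fun m => qv ^+ m * (p * p) / (1 - qv))).
- by move=> m; apply: bigcupT_measurable => e; exact: Fset_meas.
- move=> m; apply: (union_bound (b := fun e => qv ^+ m * p * qv ^+ e * p)).
  + by move=> e; exact: Fset_meas.
  + by move=> e; rewrite PF.
  + move=> N.
    have -> : \sum_(e < N) (qv ^+ m * p * qv ^+ e * p) = qv ^+ m * (p * p) * \sum_(e < N) qv ^+ e.
      by rewrite mulr_sumr; apply: eq_bigr => e _; ring.
    rewrite ler_wpM2l ?geom_le //.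
    by rewrite mulr_ge0 ?exprn_ge0 // mulr_ge0 // ltW.
- move=> N.
  have -> : \sum_(m < N) (qv ^+ m * (p * p) / (1 - qv)) = (p * p) / (1 - qv) * \sum_(m < N) qv ^+ m.
    by rewrite mulr_sumr; apply: eq_bigr => m _; ring.
  apply: (le_trans (y := (p * p) / (1 - qv) * (1 - qv)^-1)).
    rewrite ler_wpM2l ?geom_le //.
    by rewrite divr_ge0 ?mulr_ge0 // ltW.
  have h : (v%:R * p) * (v%:R * p) <= (4 * (1 - qv)) * (4 * (1 - qv)).
    by apply: ler_pM => //; rewrite mulr_ge0 // ltW.
  have -> : p * p / (1 - qv) * (1 - qv)^-1 =
     ((v%:R * p) * (v%:R * p)) / (v%:R ^+ 2 * ((1 - qv) * (1 - qv))).
    by field; rewrite ?lt0r_neq0.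
  have -> : (16 : R) / (v%:R ^+ 2) = ((4 * (1 - qv)) * (4 * (1 - qv))) / (v%:R ^+ 2 * ((1 - qv) * (1 - qv))).
    by field; rewrite ?lt0r_neq0.
  by rewrite ler_pM2r // invr_gt0 mulr_gt0 ?exprn_gt0 ?mulr_gt0.
Qed.


Lemma boundG v : (0 < v)%N ->
  (P (\bigcup_m Gset v m) <= ((2%:R : R) ^- v)%:E)%E.
Proof.
move=> v0; have [hp hq hps _] := key v0.
set p := pK R v in hp hps *; set qv := q v in hq hps *.
have hs : 0 < 1 - qv by apply: lt_le_trans hps.
have hq1 : qv < 1 by lra.
apply: (union_bound (b := fun m => qv ^+ m * pKY R v true)).
- by move=> m; exact: Gset_meas.
- by move=> m; rewrite PG.
move=> N.
have -> : \sum_(m < N) (qv ^+ m * pKY R v true) = pKY R v true * \sum_(m < N) qv ^+ m.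
  by rewrite mulr_sumr; apply: eq_bigr => m _; ring.
have ht : 0 <= (2%:R : R) ^- v by rewrite invr_ge0 exprn_ge0.
apply: (le_trans (y := pKY R v true * (1 - qv)^-1)).
  rewrite ler_wpM2l ?geom_le //.
  by rewrite /pKY mulr_ge0 // ltW.
rewrite /pKY -/p (mulrC p) -mulrA ler_piMr //.
by rewrite ler_pdivrMr // mul1r.
Qed.

Lemma boundD n :
  (P (Dset n) <= (8 * cK R * (8%:R ^-1) ^+ n)%:E)%E.
Proof.
rewrite PD lee_fin.
set u := (16 ^ n.+1)%N; set N := (16 ^ n)%N; set S := q u.
have ht : 0 < (2 : R) ^+ n by rewrite exprn_gt0.
have u0 : (0 < u)%N by rewrite expn_gt0.
have hS0 : 0 <= S by apply: sumr_ge0 => k _; exact: (pK_ge0 hiid).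
have hS1 : S <= 1 by exact: (sum_pK_le1 hmeas hiid).
have tl := tail_ge hmeas hiid u0.
have e2u : ((u + u)%:R : R) = 2 * u%:R by rewrite natrD; ring.
rewrite e2u fpM ?ler0n // /u e3 fp2X -e3 e2 [fp 2 ^+ _]exprM fp2_4 e4 in tl.
set t := (2 : R) ^+ n in ht tl *.
have f2 := fp2_ge R.
have hc0 := hc.
set x := 1 - S in tl.
have hx : (8 * cK R * t)^-1 <= x.
  apply: le_trans tl.
  have -> : 16 * t ^+ 4 * (fp 2 * (32^-1 * (t ^+ 5)^-1)) / cK R =
     fp 2 * 4 * (8 * cK R * t)^-1.
    by field; rewrite ?lt0r_neq0.
  rewrite -[X in X <= _]mul1r; apply: ler_wpM2r.
    by rewrite invr_ge0 !mulr_ge0 // ltW.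
  lra.
have hB : t ^+ 3 / (8 * cK R) <= N%:R * x.
  rewrite e1 -/t; apply: le_trans (ler_wpM2l (exprn_ge0 4 (ltW ht)) hx).
  rewrite le_eqVlt; apply/orP; left; apply/eqP.
  by field; rewrite ?lt0r_neq0.
have hx0 : 0 <= x by rewrite /x subr_ge0.
have hx1 : x <= 1 by rewrite /x; lra.
have hBn := bern_le N hx0 hx1.
have ex : 1 - x = S by rewrite /x; ring.
rewrite ex in hBn.
have hZ : 0 < t ^+ 3 / (8 * cK R) by rewrite divr_gt0 ?exprn_gt0 ?mulr_gt0.
set A := S ^+ N in hBn *.
have hA : 0 <= A by rewrite exprn_ge0.
have hAZ : A * (t ^+ 3 / (8 * cK R)) <= 1.
  apply: le_trans hBn; set Z := t ^+ 3 / (8 * cK R) in hZ hB *.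
  set Bv := N%:R * x in hB *; nra.
rewrite e5 -/t.
have -> : 8 * cK R * (t ^+ 3)^-1 = 1 / (t ^+ 3 / (8 * cK R)).
  by field; rewrite ?lt0r_neq0 ?exprn_gt0.
by rewrite ler_pdivlMr.
Qed.


Definition BF W := \bigcup_e \bigcup_m \bigcup_e' Fset (W.+1 + e) m e'.
Definition BG W := \bigcup_e \bigcup_m Gset (W.+1 + e) m.
Definition BD W := \bigcup_e Dset (W.+1 + e).

Lemma BF_meas W : measurable (BF W).
Proof.
apply: bigcupT_measurable => e; apply: bigcupT_measurable => m.
by apply: bigcupT_measurable => e'; exact: Fset_meas.
Qed.
Lemma BG_meas W : measurable (BG W).
Proof.
apply: bigcupT_measurable => e; apply: bigcupT_measurable => m.
exact: Gset_meas.
Qed.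
Lemma BD_meas W : measurable (BD W).
Proof. by apply: bigcupT_measurable => e; exact: Dset_meas. Qed.

Lemma PBF W : (0 < W)%N -> (P (BF W) <= (16 / W%:R)%:E)%E.
Proof.
move=> W0; apply: (union_bound (b := fun e => 16 / ((W.+1 + e)%:R ^+ 2))).
- move=> e; apply: bigcupT_measurable => m.
  by apply: bigcupT_measurable => e'; exact: Fset_meas.
- by move=> e; apply: boundF.
move=> N; rewrite -mulr_sumr ler_wpM2l //.
exact: sq_tail.
Qed.

Lemma PBG W : (0 < W)%N -> (P (BG W) <= (W%:R^-1)%:E)%E.
Proof.
move=> W0; apply: (union_bound (b := fun e => (2%:R : R) ^- (W.+1 + e))).
- move=> e; apply: bigcupT_measurable => m; exact: Gset_meas.
- by move=> e; apply: boundG.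
move=> N.
under eq_bigr do rewrite -exprVn.
apply: le_trans (@geom_tail R _ W.+1 N _ _) _.
- by rewrite invr_ge0.
- by rewrite invf_lt1 // ltr1n.
have -> : (2%:R : R)^-1 ^+ W.+1 / (1 - 2%:R^-1) = (2%:R^-1) ^+ W.
  by rewrite exprS; field.
exact: inv_pow_le.
Qed.

Lemma PBD W : (0 < W)%N -> (P (BD W) <= (8 * cK R / W%:R)%:E)%E.
Proof.
move=> W0; apply: (union_bound (b := fun e => 8 * cK R * (8%:R ^-1) ^+ (W.+1 + e))).
- by move=> e; exact: Dset_meas.
- by move=> e; apply: boundD.
move=> N; have h8 : 0 <= 8 * cK R by rewrite mulr_ge0 // ltW.
rewrite -mulr_sumr ler_wpM2l //.
apply: le_trans (@geom_tail R _ W.+1 N _ _) _.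
- by rewrite invr_ge0.
- by rewrite invf_lt1 // ltr1n.
have -> : (8%:R : R)^-1 ^+ W.+1 / (1 - 8%:R^-1) = (8%:R^-1) ^+ W * 7^-1.
  by rewrite exprS; field.
apply: le_trans (@inv_pow_le R 8 W erefl W0).
  by rewrite ler_piMr ?exprn_ge0 ?invr_ge0 // invf_le1 // ler1n.

Qed.


Definition Bad W := BF W `|` BG W `|` BD W.

Lemma Bad_meas W : measurable (Bad W).
Proof. by apply: measurableU; [apply: measurableU|]; [exact: BF_meas|exact: BG_meas|exact: BD_meas]. Qed.

Lemma PBad W : (0 < W)%N -> (P (Bad W) <= ((17 + 8 * cK R) / W%:R)%:E)%E.
Proof.
move=> W0; rewrite /Bad.
apply: le_trans (measureU2 P (measurableU _ _ (BF_meas W) (BG_meas W)) (BD_meas W)) _.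
apply: le_trans (leeD (measureU2 P (BF_meas W) (BG_meas W)) (lexx _)) _.
apply: le_trans (leeD (leeD (PBF W0) (PBG W0)) (PBD W0)) _.
rewrite -!EFinD lee_fin le_eqVlt; apply/orP; left; apply/eqP.
by field; rewrite pnatr_eq0 -lt0n.
Qed.

Lemma final : {ae P, forall w, stabilizes (fun i => K i w) (fun i => Y i w)}.
Proof.
set C := 17 + 8 * cK R.
have hC : 0 < C by rewrite /C addr_gt0 ?mulr_gt0.
pose Nset := \bigcap_W Bad W.+1.
have mN : measurable Nset by apply: bigcapT_measurable => W; exact: Bad_meas.
have hW : forall W, (P Nset <= (C / W.+1%:R)%:E)%E.
  move=> W; apply: le_trans (PBad (ltn0Sn W)).
  apply: le_measure; rewrite ?inE //; first exact: Bad_meas.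
  by move=> w hw; exact: hw.
have P0 : P Nset = 0.
  apply/eqP; rewrite eq_le measure_ge0 andbT.
  have := hW 0%N; have := measure_ge0 P Nset.
  case: (P Nset) hW => [x| |] hW' //= _ _.
  rewrite lee_fin leNgt; apply/negP => x0.
  have hx := hW' (Num.Def.archi_bound (C / x)).
  have ha := archi_boundP (ltW (divr_gt0 hC x0)).
  set a := Num.Def.archi_bound (C / x) in hx ha.
  move: hx; rewrite lee_fin leNgt => /negP; apply.
  have hS : (a%:R : R) < a.+1%:R by rewrite ltr_nat.
  rewrite ltr_pdivrMr ?ltr0n //.
  rewrite ltr_pdivrMr // in ha.
  apply: lt_le_trans ha _; rewrite mulrC; apply: ler_wpM2l; [exact: ltW | exact: ltW hS].
exists Nset; split => // w /= hns W.
apply: (contra_notP _ hns) => hnot.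
apply: (@det _ _ W.+2) => //.
- move=> v m e hv [h1 [h2 h3]]; apply: hnot; left; left.
  exists (v - W.+2)%N => //; exists m => //; exists e => //.
  by rewrite subnKC.
- move=> v m hv [h1 [h2 h3]]; apply: hnot; left; right.
  exists (v - W.+2)%N => //; exists m => //.
  by rewrite subnKC.
- move=> n hn hd; apply: hnot; right.
  exists (n - W.+2)%N => //.
  by rewrite subnKC.
Qed.

End Main2.

Unset Implicit Arguments.

Theorem mainTheorem6 (R : realType) (d : measure_display) (T : measurableType d)
  (P : probability T R) (K : nat -> T -> nat) (Y : nat -> T -> bool)
  (hmeas : forall (i k : nat) (b : bool),
      measurable [set w | K i w = k /\ Y i w = b])
  (hiid : forall (n : nat) (k : nat -> nat) (b : nat -> bool),
      P [set w | forall i, (i < n)%N -> K i w = k i /\ Y i w = b i]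
      = (\prod_(i < n) pKY R (k i) (b i))%:E) :
  {ae P, forall w, stabilizes (fun i => K i w) (fun i => Y i w)}.
Proof. exact: (final hmeas hiid). Qed.
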